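(* Under the standing assumptions, for $0\le i\le d$ we have, as subspaces of $V$: (i) $E_iV+E_{i+1}V+\cdots+E_dV=U_i+U_{i+1}+\cdots+U_d$; (ii) $E^*_0V+E^*_1V+\cdots+E^*_iV=U_0+U_1+\cdots+U_i$.
   Context: Let $\mathbb F$ be an algebraically closed field, $d\ge0$, and $q,a,b,c,a^*,b^*,c^*\in\mathbb F$ with $q,b,c,b^*,c^*$ nonzero and $q^2\ne\pm1$. Put $\theta_i=a+bq^{2i-d}+cq^{d-2i}$ and $\theta^*_i=a^*+b^*q^{2i-d}+c^*q^{d-2i}$ ($0\le i\le d$), and assume $\theta_0,\dots,\theta_d$ are mutually distinct and $\theta^*_0,\dots,\theta^*_d$ are mutually distinct (this forces $q^{2i}\ne1$ for $1\le i\le d$). $U_q(\widehat{\mathfrak{sl}}_2)$ is the associative unital $\mathbb F$-algebra with generators $e_i^{\pm},K_i^{\pm1}$ ($i\in\{0,1\}$) and relations $K_iK_i^{-1}=K_i^{-1}K_i=1$, $K_0K_1=K_1K_0$, $K_ie_i^{\pm}K_i^{-1}=q^{\pm2}e_i^{\pm}$, $K_ie_j^{\pm}K_i^{-1}=q^{\mp2}e_j^{\pm}$ ($i\ne j$), $e_i^+e_i^--e_i^-e_i^+=(K_i-K_i^{-1})/(q-q^{-1})$, $e_0^{\pm}e_1^{\mp}=e_1^{\mp}e_0^{\pm}$, and the $q$-Serre relations $(e_i^\pm)^3e_j^\pm-[3]_q(e_i^\pm)^2e_j^\pm e_i^\pm+[3]_qe_i^\pm e_j^\pm(e_i^\pm)^2-e_j^\pm(e_i^\pm)^3=0$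 ($i\ne j$), where $[3]_q=q^2+1+q^{-2}$. Tensor products of modules are formed via $e_i^+(v\otimes w)=e_i^+v\otimes K_iw+v\otimes e_i^+w$, $e_i^-(v\otimes w)=e_i^-v\otimes w+K_i^{-1}v\otimes e_i^-w$, $K_i(v\otimes w)=K_iv\otimes K_iw$. For nonzero $\alpha\in\mathbb F$, $V(\alpha)$ is the module with basis $x,y$ and $K_1x=qx$, $K_1y=q^{-1}y$, $e_1^-x=y$, $e_1^-y=0$, $e_1^+x=0$, $e_1^+y=x$, $K_0x=q^{-1}x$, $K_0y=qy$, $e_0^-x=0$, $e_0^-y=q\alpha^{-1}x$, $e_0^+x=q^{-1}\alpha y$, $e_0^+y=0$. $V=V(\alpha_1)\otimes\cdots\otimes V(\alpha_d)$ with nonzero $\alpha_i\in\mathbb F$ (for $d=0$, the trivial module where each $e_i^\pm$ acts as $0$ and each $K_i^{\pm1}$ as $1$). For $0\le i\le d$, $U_i\subseteq V$ is the span of the basis vectors $v_1\otimes\cdots\otimes v_d$ ($v_k\in\{x,y\}$) with exactly $i$ factors equal to $y$. Fix $u,v,u^*,v^*\in\mathbb F$ with $uv^*=-bb^*q^{-1}(q-q^{-1})^2$, $vu^*=-cc^*q^{-1}(q-q^{-1})^2$; set $R=ue_0^++ve_1^-K_1$, $L=u^*e_1^++v^*e_0^-K_0$, $A=a1+bK_0+cK_1+R$, $A^*=a^*1+b^*K_0+c^*K_1+L$, and $E_i=\prod_{0\le j\le d,\,j\ne i}(A-\theta_j1)/(\theta_i-\theta_j)$, $E^*_i=\prod_{0\le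 j\le d,\,j\ne i}(A^*-\theta^*_j1)/(\theta^*_i-\theta^*_j)$ in $U_q(\widehat{\mathfrak{sl}}_2)$. *)

(* Defs.v *)
From HB Require Import structures.
From mathcomp Require Import all_boot all_order all_algebra.
Set Implicit Arguments. Unset Strict Implicit. Unset Printing Implicit Defensive.
Import Order.TTheory GRing.Theory Num.Theory.
Local Open Scope ring_scope.

Section Uq.
Variables (F : fieldType) (q : F) (d : nat) (alpha : 'I_d -> F).

(* Basis of V = V(alpha_1) (x) ... (x) V(alpha_d): functions t : 'I_d -> bool,
   t k = false means the (k+1)-th factor is x, t k = true means it is y.
   Position k : 'I_d carries the factor V(alpha k). *)
Definition basisT := {ffun 'I_d -> bool}.
Definition dimV := #|{: basisT}|.

Definition K0val (b : bool) : F := if b then q else q^-1.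
Definition K1val (b : bool) : F := if b then q^-1 else q.

(* Single-factor coefficients: coefficient of basis vector t in g . s. *)
Definition e1m1 (k : 'I_d) (s t : bool) : F := if ~~ s && t then 1 else 0.
Definition e1p1 (k : 'I_d) (s t : bool) : F := if s && ~~ t then 1 else 0.
Definition e0m1 (k : 'I_d) (s t : bool) : F := if s && ~~ t then q / alpha k else 0.
Definition e0p1 (k : 'I_d) (s t : bool) : F := if ~~ s && t then alpha k / q else 0.

(* Iterated coproduct (from the given tensor product rules):
   e^+ acts as sum_k 1 (x) .. (x) 1 (x) e^+ (x) K (x) .. (x) K   (e^+ in slot k)
   e^- acts as sum_k K^-1 (x) .. (x) K^-1 (x) e^- (x) 1 (x) .. (x) 1
   K   acts as K (x) .. (x) K.
   coef* Kv e s t = coefficient of basis vector t in (generator . s). *)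
Definition coefP (Kv : bool -> F) (e : 'I_d -> bool -> bool -> F) (s t : basisT) : F :=
  \sum_(k < d) ((\prod_(j < d | (j < k)%N) (s j == t j)%:R) * e k (s k) (t k) *
                 \prod_(j < d | (k < j)%N) ((s j == t j)%:R * Kv (s j))).
Definition coefM (Kv : bool -> F) (e : 'I_d -> bool -> bool -> F) (s t : basisT) : F :=
  \sum_(k < d) ((\prod_(j < d | (j < k)%N) ((s j == t j)%:R * (Kv (s j))^-1)) *
                 e k (s k) (t k) * \prod_(j < d | (k < j)%N) (s j == t j)%:R).
Definition coefK (Kv : bool -> F) (s t : basisT) : F :=
  (s == t)%:R * \prod_(j < d) Kv (s j).

(* Matrix of an operator acting on column vectors: entry (row t, column s)
   is the coefficient of basis vector t in (operator . s). So the matrix of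
   a product g h of operators is (mx g) *m (mx h). *)
Definition opmx (c : basisT -> basisT -> F) : 'M[F]_dimV :=
  \matrix_(i, j) c (enum_val j) (enum_val i).

Definition K0mx := opmx (coefK K0val).
Definition K1mx := opmx (coefK K1val).
Definition e0pmx := opmx (coefP K0val e0p1).
Definition e1pmx := opmx (coefP K1val e1p1).
Definition e0mmx := opmx (coefM K0val e0m1).
Definition e1mmx := opmx (coefM K1val e1m1).

(* The subspace U_i: span of basis vectors with exactly i factors equal to y,
   given as the row space of a diagonal 0/1 matrix. *)
Definition Umx (i : nat) : 'M[F]_dimV :=
  \matrix_(a, b) ((a == b) && (#|[pred k | (enum_val a : basisT) k]| == i))%:R.

(* The subspace M V (image of the operator with matrix M acting on columns). *)
Definition img (M : 'M[F]_dimV) : 'M[F]_dimV := M^T.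

Definition Amx (a b c u v : F) : 'M[F]_dimV :=
  a%:M + b *: K0mx + c *: K1mx + (u *: e0pmx + v *: (e1mmx *m K1mx)).
Definition Asmx (as_ bs cs us vs : F) : 'M[F]_dimV :=
  as_%:M + bs *: K0mx + cs *: K1mx + (us *: e1pmx + vs *: (e0mmx *m K0mx)).

Definition Eidem (A : 'M[F]_dimV) (th : nat -> F) (i : nat) : 'M[F]_dimV :=
  foldr (fun j M => M *m ((th i - th j)^-1 *: (A - (th j)%:M))) 1%:M
        [seq j <- iota 0 d.+1 | j != i].

End Uq.

Definition theta (F : fieldType) (q a b c : F) (d i : nat) : F :=
  a + b * q ^ (Posz (2 * i)%N - Posz d) + c * q ^ (Posz d - Posz (2 * i)%N).

(* Main.v *)
Require Import Defs.
From HB Require Import structures.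
From mathcomp Require Import all_boot all_order all_algebra.
Set Implicit Arguments. Unset Strict Implicit. Unset Printing Implicit Defensive.
Import Order.TTheory GRing.Theory Num.Theory.
Local Open Scope ring_scope.

Section Core.
Variable F : fieldType.

Definition Gm n (g : 'I_n -> nat) (j : nat) : 'M[F]_n :=
  \matrix_(a, b) ((a == b) && (g a == j))%:R.

Lemma sub_sumsl (r : seq nat) (P : pred nat) m n (A : nat -> 'M[F]_n) (B : 'M[F]_(m,n)) :
  (forall j, j \in r -> P j -> (A j <= B)%MS) -> (\sum_(j <- r | P j) A j <= B)%MS.
Proof.
move=> H; rewrite big_seq_cond; elim/big_ind: _ => //.
- exact: sub0mx.
- by move=> X Y HX HY; rewrite addsmx_sub HX.
- by move=> j /andP[jr Pj]; apply: H.
Qed.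

Lemma sup_sums (r : seq nat) (P : pred nat) j m n (A : 'M[F]_(m,n)) (B : nat -> 'M[F]_n) :
  (j \in r)%N -> P j -> (A <= B j)%MS -> (A <= \sum_(i <- r | P i) B i)%MS.
Proof.
move=> jr Pj sAB; rewrite (big_rem j) //= Pj.
exact: submx_trans sAB (addsmxSl _ _).
Qed.

Lemma core n (E : nat -> 'M[F]_n) (g : 'I_n -> nat) (d lo hi : nat) :
  (\sum_(0 <= j < d.+1) E j = 1%:M) ->
  (forall j, (lo <= j < hi)%N -> forall a b, ~~ (lo <= g b < hi)%N -> (E j)^T a b = 0) ->
  (forall j, (j < d.+1)%N -> ~~ (lo <= j < hi)%N -> forall a, (lo <= g a < hi)%N ->
      row a (E j)^T = 0) ->
  ((\sum_(lo <= j < hi) (E j)^T)%MS == (\sum_(lo <= j < hi) Gm g j)%MS)%MS.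
Proof.
move=> H3 H1 H2.
have supp (x : 'rV[F]_n) : (forall b, ~~ (lo <= g b < hi)%N -> x 0 b = 0) ->
    (x <= \sum_(lo <= j < hi) Gm g j)%MS.
  move=> Hx; rewrite (row_sum_delta x); apply: summx_sub => b _.
  case: (boolP (lo <= g b < hi)%N) => Hb; last by rewrite Hx // scale0r sub0mx.
  apply: scalemx_sub; apply: (@sup_sums _ _ (g b)); rewrite ?mem_index_iota //.
  have -> : delta_mx 0 b = row b (Gm g (g b)).
    by apply/rowP => k; rewrite !mxE !eqxx andbT eq_sym.
  exact: row_sub.
apply/andP; split.
  apply: sub_sumsl => j; rewrite mem_index_iota => Hj _.
  apply/row_subP => a; apply: supp => b Hb; rewrite mxE; exact: H1.
apply: sub_sumsl => j; rewrite mem_index_iota => Hj _.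
apply/row_subP => a.
have -> : row a (Gm g j) = (g a == j)%:R *: delta_mx 0 a.
  by apply/rowP => k; rewrite !mxE eq_sym; case: (k == a); case: (g a == j); rewrite ?mulr1 ?mulr0.
case: (eqVneq (g a) j) => [ga|gna]; last by rewrite scale0r sub0mx.
apply: scalemx_sub.
have -> : (delta_mx 0 a : 'rV[F]_n) = delta_mx 0 a *m (\sum_(0 <= k < d.+1) E k)^T.
  by rewrite H3 trmx1 mulmx1.
have -> : (\sum_(0 <= k < d.+1) E k)^T = \sum_(0 <= k < d.+1) (E k)^T.
  by apply/matrixP => i0 j0; rewrite mxE !summxE; apply: eq_bigr => k _; rewrite mxE.
rewrite mulmx_sumr big_seq; apply: summx_sub => k.
rewrite mem_index_iota => /= Hk.
case: (boolP (lo <= k < hi)%N) => Hkr.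
  by apply: (@sup_sums _ _ k); rewrite ?mem_index_iota // submxMl.
by rewrite -rowE H2 // ?ga // sub0mx.
Qed.
End Core.

Section PolyPart.
Variable F : fieldType.

Definition EidemG n (A : 'M[F]_n) (th : nat -> F) (d i : nat) : 'M[F]_n :=
  foldr (fun j M => M *m ((th i - th j)^-1 *: (A - (th j)%:M))) 1%:M
        [seq j <- iota 0 d.+1 | j != i].

Definition Pj (th : nat -> F) (d j : nat) : {poly F} :=
  \prod_(l <- [seq l <- iota 0 d.+1 | l != j]) ((th j - th l)^-1 *: ('X - (th l)%:P)).

Lemma EidemG_horner n' (A : 'M[F]_n'.+1) th d j :
  EidemG A th d j = horner_mx A (Pj th d j).
Proof.
rewrite /EidemG /Pj; move: [seq l <- iota 0 d.+1 | l != j] => s; elim: s => [|l s IH] /=.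
  by rewrite big_nil [RHS]rmorph1.
rewrite big_cons IH [_ * \prod_(_ <- s) _]mulrC rmorphM /= [in RHS]linearZ /=.
rewrite [horner_mx A (_ - _)]rmorphB /= horner_mx_X horner_mx_C.
by rewrite mulmxE.
Qed.

Lemma horner_trmx n' (A : 'M[F]_n'.+1) p : (horner_mx A p)^T = horner_mx A^T p.
Proof.
elim/poly_ind: p => [|p c IH]; first by rewrite !rmorph0 trmx0.
rewrite !rmorphD !rmorphM /= !horner_mx_X !horner_mx_C linearD /= tr_scalar_mx.
rewrite -mulmxE trmx_mul IH; congr (_ + _).
have: comm_mx A^T (horner_mx A^T p) by apply: comm_mx_horner.
by rewrite /comm_mx mulmxE => ->.
Qed.

End PolyPart.

Section PolyPart2.
Variable F : fieldType.

Variables (th : nat -> F) (d : nat).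
Hypothesis thinj : forall i j, (i <= d)%N -> (j <= d)%N -> th i = th j -> i = j.

Lemma Pj_eval j k : (j <= d)%N -> (k <= d)%N -> (Pj th d j).[th k] = (j == k)%:R.
Proof.
move=> jd kd; rewrite /Pj horner_prod.
case: (eqVneq j k) => [<-|jk].
  rewrite big1_seq // => l; rewrite mem_filter mem_iota /= => /andP[lj ld].
  rewrite hornerZ hornerXsubC mulVf // subr_eq0; apply/eqP => E.
  by move/eqP: lj; apply; apply: thinj => //; rewrite -ltnS.
rewrite (bigD1_seq k); first by rewrite hornerZ hornerXsubC subrr mulr0 /= mul0r.
  by rewrite mem_filter mem_iota /= eq_sym jk.
by apply: filter_uniq; apply: iota_uniq.
Qed.

Lemma size_Pj j : (j <= d)%N -> (size (Pj th d j) <= d.+1)%N.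
Proof.
move=> jd.
have H : forall s : seq nat, (size (\prod_(l <- s) ((th j - th l)^-1 *: ('X - (th l)%:P)))%R <= (size s).+1)%N.
  elim=> [|l s IH]; first by rewrite big_nil size_poly1.
  rewrite big_cons; apply: leq_trans (size_mul_leq _ _) _.
  have h1 : (size ((th j - th l)^-1 *: ('X - (th l)%:P)) <= 2)%N.
    by apply: leq_trans (size_scale_leq _ _) _; rewrite size_XsubC.
  have h3 := leq_add IH h1; rewrite addn2 in h3.
  by rewrite -subn1 addnC (leq_trans (leq_sub2r 1 h3)) // subn1.
apply: leq_trans (H _) _.
have Hc : count (predC (pred1 j)) (iota 0 d.+1) = d.
  have := count_predC (pred1 j) (iota 0 d.+1).
  rewrite size_iota count_uniq_mem ?iota_uniq // mem_iota add0n ltnS jd add1n.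
  by case.
by rewrite size_filter; move: Hc => /= ->.
Qed.

Lemma Pj_sum : \sum_(0 <= j < d.+1) Pj th d j = 1.
Proof.
apply/eqP; rewrite -subr_eq0; apply/eqP.
apply: (@roots_geq_poly_eq0 _ _ [seq th k | k <- iota 0 d.+1]).
- apply/allP => x /mapP[k]; rewrite mem_iota /= => kd ->.
  rewrite /root hornerD hornerN hornerC horner_sum.
  rewrite (bigD1_seq k); last by apply: iota_uniq.
    rewrite Pj_eval // eqxx big1_seq /=; first by rewrite addr0 subrr.
    move=> l /andP[lk].
    by rewrite mem_iota /= => ld; rewrite Pj_eval // (negPf lk).
  by rewrite mem_iota.
- rewrite map_inj_in_uniq ?iota_uniq // => x y; rewrite !mem_iota /= => xd yd.
  by apply: thinj.
- rewrite size_map size_iota.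
  apply: leq_trans (size_add _ _) _; rewrite geq_max size_opp size_poly1 andbT.
  rewrite big_seq; elim/big_ind: _ => [|x y hx hy|k].
  + by rewrite size_poly0.
  + by apply: leq_trans (size_add _ _) _; rewrite geq_max hx hy.
  + by rewrite mem_index_iota => /andP[_ kd]; apply: size_Pj.
Qed.
End PolyPart2.

Section Div.
Variable F : fieldType.
Lemma Pj_div (th : nat -> F) d j (s : seq nat) : uniq s ->
  (forall k, k \in s -> (k <= d)%N && (k != j)) ->
  exists r, Pj th d j = r * \prod_(k <- s) ('X - (th k)%:P).
Proof.
move=> us Hs; rewrite /Pj.
set L := [seq l <- iota 0 d.+1 | l != j].
under eq_bigr do rewrite -mul_polyC.
rewrite big_split /=.
have pe : perm_eq [seq x <- L | x \in s] s.
  apply: uniq_perm; first by apply: filter_uniq; apply: filter_uniq; apply: iota_uniq.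
    by [].
  move=> x; rewrite mem_filter; case xs: (x \in s) => //=.
  have /andP[xd xj] := Hs x xs.
  by rewrite mem_filter xj mem_iota.
have E : \prod_(i <- L) ('X - (th i)%:P) = \prod_(i <- s) ('X - (th i)%:P) *
    \prod_(i <- [seq x <- L | predC (mem s) x]) ('X - (th i)%:P).
  by rewrite -(perm_big _ (permEl (perm_filterC (mem s) L))) big_cat /= (perm_big _ pe).
rewrite E.
exists ((\prod_(i <- L) (th j - th i)^-1%:P) * \prod_(i <- [seq x <- L | predC (mem s) x]) ('X - (th i)%:P)).
by rewrite mulrA mulrAC.
Qed.
End Div.

Section Up.
Variables (F : fieldType) (n' : nat) (B : 'M[F]_n'.+1) (g : 'I_n'.+1 -> nat) (th : nat -> F).
Hypothesis hB1 : forall a b, (g b < g a)%N -> B a b = 0.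
Hypothesis hB2 : forall a b, g a = g b -> B a b = (a == b)%:R * th (g a).

Definition low m (x : 'rV[F]_n'.+1) := forall b, (g b < m)%N -> x 0 b = 0.

Lemma low_step m x : low m x -> low m.+1 (x *m (B - (th m)%:M)).
Proof.
move=> lx b gb; rewrite mxE big1 // => a _.
case: (ltnP (g a) m) => gam; first by rewrite lx // mul0r.
rewrite !mxE; case: (ltnP (g b) (g a)) => gba.
  rewrite hB1 //; have -> : (a == b) = false.
    by apply/eqP => E; move: gba; rewrite E ltnn.
  by rewrite mulr0n subrr mulr0.
have gbm : (g b <= m)%N by rewrite -ltnS.
have E : g a = g b by apply/eqP; rewrite eqn_leq gba (leq_trans gbm gam).
rewrite hB2 // E.
have -> : g b = m by apply/eqP; rewrite eqn_leq -ltnS gb -E gam.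
by rewrite mulr_natl subrr mulr0.
Qed.

Lemma low_prod m k x : low m x ->
  low (m + k) (x *m horner_mx B (\prod_(m <= l < m + k) ('X - (th l)%:P))).
Proof.
elim: k => [|k IH] lx.
  by rewrite addn0 big_geq // rmorph1 mulmx1.
rewrite addnS big_nat_recr /= ?leq_addr // rmorphM /= -mulmxE mulmxA.
rewrite rmorphB /= horner_mx_X horner_mx_C.
exact: low_step (IH lx).
Qed.
End Up.

Section Down.
Variables (F : fieldType) (n' : nat) (B : 'M[F]_n'.+1) (g : 'I_n'.+1 -> nat) (th : nat -> F).
Hypothesis hB1 : forall a b, (g a < g b)%N -> B a b = 0.
Hypothesis hB2 : forall a b, g a = g b -> B a b = (a == b)%:R * th (g a).

Definition dlow m (x : 'rV[F]_n'.+1) := forall b, (m <= g b)%N -> x 0 b = 0.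

Lemma dlow_step m x : dlow m.+1 x -> dlow m (x *m (B - (th m)%:M)).
Proof.
move=> lx b gb; rewrite mxE big1 // => a _.
case: (ltnP m (g a)) => gam; first by rewrite lx // mul0r.
rewrite !mxE; case: (ltnP (g a) (g b)) => gba.
  rewrite hB1 //; have -> : (a == b) = false.
    by apply/eqP => E; move: gba; rewrite E ltnn.
  by rewrite mulr0n subrr mulr0.
have E : g a = g b by apply/eqP; rewrite eqn_leq gba (leq_trans gam gb).
rewrite hB2 // E.
have -> : g b = m by apply/eqP; rewrite eqn_leq gb -E gam.
by rewrite mulr_natl subrr mulr0.
Qed.

Lemma dlow_prod m k x : dlow (m + k) x ->
  dlow m (x *m horner_mx B (\prod_(m <= l < m + k) ('X - (th l)%:P))).
Proof.
elim: k x => [|k IH] x lx.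
  by move: lx; rewrite addn0 big_geq // rmorph1 mulmx1.
rewrite addnS big_nat_recr /= ?leq_addr // mulrC rmorphM /= -mulmxE mulmxA.
rewrite rmorphB /= horner_mx_X horner_mx_C.
apply: IH; apply: dlow_step; by rewrite -addnS.
Qed.
End Down.

Section Gen.
Variable F : fieldType.

Lemma G3 n (A : 'M[F]_n) th d :
  (forall i j, (i <= d)%N -> (j <= d)%N -> th i = th j -> i = j) ->
  \sum_(0 <= j < d.+1) EidemG A th d j = 1%:M.
Proof.
case: n A => [|n'] A thinj; first by apply/matrixP => -[].
under eq_bigr do rewrite EidemG_horner.
by rewrite -rmorph_sum Pj_sum // rmorph1.
Qed.

Lemma entry_row n (X Y : 'M[F]_n) a b : (X *m Y) a b = (row a X *m Y) 0 b.
Proof. by rewrite -row_mul [RHS]mxE. Qed.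

Lemma U1 n (A : 'M[F]_n) (g : 'I_n -> nat) th d i :
  (forall a, (g a <= d)%N) ->
  (forall x y, (g x < g y)%N -> A x y = 0) ->
  (forall x y, g x = g y -> A x y = (x == y)%:R * th (g y)) ->
  forall j, (i <= j < d.+1)%N -> forall a b, ~~ (i <= g b < d.+1)%N -> (EidemG A th d j)^T a b = 0.
Proof.
case: n A g => [|n'] A g gd h1 h2 j /andP[ij jd] a b Hb; first by case: a.
rewrite EidemG_horner horner_trmx.
have HH : forall k, k \in index_iota 0 (0 + i) -> (k <= d)%N && (k != j).
  move=> k; rewrite mem_index_iota => /andP[_ ki].
  rewrite add0n in ki.
  have kd : (k <= d)%N by rewrite -ltnS (ltn_trans ki) // (leq_ltn_trans ij jd).
  by rewrite kd neq_ltn (leq_trans ki ij).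
have [r ->] := @Pj_div F th d j (index_iota 0 (0 + i)) (iota_uniq _ _) HH.
rewrite rmorphM -mulmxE entry_row.
apply: (@low_prod F n' A^T g th).
- by move=> x y gyx; rewrite mxE h1.
- by move=> x y gxy; rewrite mxE h2 // eq_sym gxy.
- by move=> c.
- by rewrite add0n ltnNge; move: Hb; rewrite ltnS gd andbT.
Qed.

Lemma U2 n (A : 'M[F]_n) (g : 'I_n -> nat) th d i :
  (forall a, (g a <= d)%N) ->
  (forall x y, (g x < g y)%N -> A x y = 0) ->
  (forall x y, g x = g y -> A x y = (x == y)%:R * th (g y)) ->
  (i <= d)%N ->
  forall j, (j < d.+1)%N -> ~~ (i <= j < d.+1)%N -> forall a, (i <= g a < d.+1)%N -> row a (EidemG A th d j)^T = 0.
Proof.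
case: n A g => [|n'] A g gd h1 h2 id j jd Hj a Ha; first by case: a Ha.
have ji : (j < i)%N by move: Hj; rewrite jd andbT -ltnNge.
rewrite EidemG_horner horner_trmx.
have HH : forall k, k \in index_iota i (i + (d.+1 - i)) -> (k <= d)%N && (k != j).
  have id1 : (i <= d.+1)%N by apply: leq_trans id _.
  move=> k; rewrite mem_index_iota subnKC // => /andP[ik kd].
  by rewrite -ltnS kd /= neq_ltn (leq_trans ji ik) orbT.
have [r ->] := @Pj_div F th d j (index_iota i (i + (d.+1 - i))) (iota_uniq _ _) HH.
rewrite mulrC rmorphM -mulmxE rowE mulmxA.
suff -> : (delta_mx 0 a : 'rV[F]_n'.+1) *m horner_mx A^T (\prod_(i <= k < i + (d.+1 - i)) ('X - (th k)%:P)) = 0.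
  by rewrite mul0mx.
apply/rowP => b; rewrite [RHS]mxE.
apply: (@low_prod F n' A^T g th _ _ i (d.+1 - i) (delta_mx 0 a)).
- by move=> x y gyx; rewrite mxE h1.
- by move=> x y gxy; rewrite mxE h2 // eq_sym gxy.
- move=> c gc; rewrite mxE; case: (eqVneq a c) => [ac|ac]; last by rewrite andbF.
  by move: Ha gc; rewrite ac => /andP[h _]; rewrite ltnNge h.
- by rewrite subnKC ?ltnS ?gd // (leq_trans id).
Qed.

Lemma D1 n (A : 'M[F]_n) (g : 'I_n -> nat) th d i :
  (forall a, (g a <= d)%N) ->
  (forall x y, (g y < g x)%N -> A x y = 0) ->
  (forall x y, g x = g y -> A x y = (x == y)%:R * th (g y)) ->
  (i <= d)%N ->
  forall j, (0 <= j < i.+1)%N -> forall a b, ~~ (0 <= g b < i.+1)%N -> (EidemG A th d j)^T a b = 0.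
Proof.
case: n A g => [|n'] A g gd h1 h2 id j /andP[_ ji] a b Hb; first by case: a.
rewrite EidemG_horner horner_trmx.
have HH : forall k, k \in index_iota i.+1 (i.+1 + (d - i)) -> (k <= d)%N && (k != j).
  move=> k; rewrite mem_index_iota addSn subnKC // => /andP[ik kd].
  by rewrite -ltnS kd /= neq_ltn (leq_ltn_trans (ji : (j <= i)%N) ik) orbT.
have [r ->] := @Pj_div F th d j (index_iota i.+1 (i.+1 + (d - i))) (iota_uniq _ _) HH.
rewrite rmorphM -mulmxE entry_row.
apply: (@dlow_prod F n' A^T g th _ _ i.+1 (d - i)).
- by move=> x y gyx; rewrite mxE h1.
- by move=> x y gxy; rewrite mxE h2 // eq_sym gxy.
- by move=> c; rewrite addSn subnKC // leqNgt ltnS gd.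
- by move: Hb; rewrite leq0n /= -leqNgt.
Qed.

Lemma D2 n (A : 'M[F]_n) (g : 'I_n -> nat) th d i :
  (forall a, (g a <= d)%N) ->
  (forall x y, (g y < g x)%N -> A x y = 0) ->
  (forall x y, g x = g y -> A x y = (x == y)%:R * th (g y)) ->
  (i <= d)%N ->
  forall j, (j < d.+1)%N -> ~~ (0 <= j < i.+1)%N -> forall a, (0 <= g a < i.+1)%N -> row a (EidemG A th d j)^T = 0.
Proof.
case: n A g => [|n'] A g gd h1 h2 id j jd Hj a Ha; first by case: a Ha.
have ij : (i < j)%N by move: Hj; rewrite leq0n /= -leqNgt.
rewrite EidemG_horner horner_trmx.
have HH : forall k, k \in index_iota 0 (0 + i.+1) -> (k <= d)%N && (k != j).
  move=> k; rewrite mem_index_iota add0n => /andP[_ ki].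
  have ki' : (k <= i)%N := ki.
  by rewrite (leq_trans ki' id) /= neq_ltn (leq_ltn_trans ki' ij).
have [r ->] := @Pj_div F th d j (index_iota 0 (0 + i.+1)) (iota_uniq _ _) HH.
rewrite mulrC rmorphM -mulmxE rowE mulmxA.
suff -> : (delta_mx 0 a : 'rV[F]_n'.+1) *m horner_mx A^T (\prod_(0 <= k < 0 + i.+1) ('X - (th k)%:P)) = 0.
  by rewrite mul0mx.
apply/rowP => b; rewrite [RHS]mxE.
apply: (@dlow_prod F n' A^T g th _ _ 0 i.+1 (delta_mx 0 a)).
- by move=> x y gyx; rewrite mxE h1.
- by move=> x y gxy; rewrite mxE h2 // eq_sym gxy.
- move=> c gc; rewrite mxE; case: (eqVneq a c) => [ac|ac]; last by rewrite andbF.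
  by move: Ha gc; rewrite ac add0n /= => h; rewrite leqNgt h.
- by [].
Qed.
End Gen.

Section Concrete.
Variables (F : fieldType) (q : F) (d : nat).
Hypothesis qn0 : q != 0.

Lemma prodK (Kv : bool -> F) (s : basisT d) :
  \prod_(j < d) Kv (s j) = Kv true ^+ #|[pred j | s j]| * Kv false ^+ (d - #|[pred j | s j]|).
Proof.
rewrite (bigID (fun j => s j)) /=.
rewrite (eq_bigr (fun=> Kv true)); last by move=> j ->.
rewrite [X in _ * X](eq_bigr (fun=> Kv false)); last by move=> j /negPf ->.
rewrite !prodr_const; congr (_ * _ ^+ _).
have hc : (#|[pred j | s j]| + #|[predC [pred j | s j]]| = d)%N by rewrite cardC card_ord.
transitivity #|[predC [pred j | s j]]|; first by apply: eq_card.
move: hc; set c := #|[pred j | s j]|; set c' := #|[predC _]| => hc.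
by rewrite -hc addKn.
Qed.

Lemma card_le (s : basisT d) : (#|[pred j | s j]| <= d)%N.
Proof. by apply: leq_trans (max_card _) _; rewrite card_ord. Qed.

Lemma powconv t : (t <= d)%N -> q ^+ t * q^-1 ^+ (d - t) = q ^ (Posz (2 * t)%N - Posz d).
Proof.
move=> td.
have -> : (Posz (2 * t)%N - Posz d) = Posz t + - Posz (d - t)%N.
  by rewrite -subzn // opprB addrA -PoszD addnn -mul2n.
by rewrite expfzDr // -exprnN exprVn.
Qed.

Lemma powconv' t : (t <= d)%N -> q^-1 ^+ t * q ^+ (d - t) = q ^ (Posz d - Posz (2 * t)%N).
Proof.
move=> td.
have -> : (Posz d - Posz (2 * t)%N) = Posz (d - t)%N + - Posz t.
  by rewrite -subzn // -addrA -opprD -PoszD addnn -mul2n.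
by rewrite expfzDr // -exprnN exprVn mulrC.
Qed.

Lemma card_flip (s t : basisT d) k :
  (forall j, j != k -> s j = t j) -> ~~ s k -> t k ->
  #|[pred j | t j]| = #|[pred j | s j]|.+1.
Proof.
move=> H sk tk.
rewrite (cardD1 k) [in RHS](cardD1 k) !inE tk (negPf sk) /= add1n add0n.
congr _.+1; apply: eq_card => j; rewrite !inE.
by case: (eqVneq j k) => //= jk; rewrite H.
Qed.

Lemma prod0 (P : pred 'I_d) (f : 'I_d -> F) j : P j -> f j = 0 -> \prod_(i | P i) f i = 0.
Proof. by move=> Pj fj; rewrite (bigD1 j) //= fj mul0r. Qed.

Lemma term0 (s t : basisT d) (k : 'I_d) (L R E : F) :
  (forall j : 'I_d, (j < k)%N -> s j != t j -> L = 0) ->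
  (forall j : 'I_d, (k < j)%N -> s j != t j -> R = 0) ->
  (E != 0 -> (forall j, j != k -> s j = t j) -> False) ->
  L * E * R = 0.
Proof.
move=> HL HR HE.
case: (boolP [exists j, (j != k) && (s j != t j)]).
  case/existsP => j /andP[jk sj]; case: (ltngtP j k) => [jk'|kj|e].
  - by rewrite (HL j) // !mul0r.
  - by rewrite (HR j) // mulr0.
  - by move: jk; rewrite (ord_inj e) eqxx.
rewrite negb_exists => /forallP H.
case: (eqVneq E 0) => [->|En]; first by rewrite mulr0 mul0r.
exfalso; apply: (HE En) => j jk; move: (H j); by rewrite jk /= negbK => /eqP.
Qed.

Lemma coefP_up Kv (e : 'I_d -> bool -> bool -> F) (s t : basisT d) :
  (forall k b b', e k b b' != 0 -> ~~ b && b') ->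
  (#|[pred j | t j]| <= #|[pred j | s j]|)%N -> coefP Kv e s t = 0.
Proof.
move=> He ct; rewrite /coefP big1 // => k _.
apply: (@term0 s t k).
- by move=> j jk sj; apply: (prod0 (j := j)) => //=; rewrite (negPf sj).
- by move=> j kj sj; apply: (prod0 (j := j)) => //=; rewrite (negPf sj) mul0r.
- move=> /He /andP[sk tk] H.
  by move: ct; rewrite (card_flip H sk tk) ltnn.
Qed.

Lemma coefM_up Kv (e : 'I_d -> bool -> bool -> F) (s t : basisT d) :
  (forall k b b', e k b b' != 0 -> ~~ b && b') ->
  (#|[pred j | t j]| <= #|[pred j | s j]|)%N -> Defs.coefM Kv e s t = 0.
Proof.
move=> He ct; rewrite /Defs.coefM big1 // => k _.
apply: (@term0 s t k).
- by move=> j jk sj; apply: (prod0 (j := j)) => //=; rewrite (negPf sj) mul0r.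
- by move=> j kj sj; apply: (prod0 (j := j)) => //=; rewrite (negPf sj).
- move=> /He /andP[sk tk] H.
  by move: ct; rewrite (card_flip H sk tk) ltnn.
Qed.

Lemma coefP_down Kv (e : 'I_d -> bool -> bool -> F) (s t : basisT d) :
  (forall k b b', e k b b' != 0 -> b && ~~ b') ->
  (#|[pred j | s j]| <= #|[pred j | t j]|)%N -> coefP Kv e s t = 0.
Proof.
move=> He ct; rewrite /coefP big1 // => k _.
apply: (@term0 s t k).
- by move=> j jk sj; apply: (prod0 (j := j)) => //=; rewrite (negPf sj).
- by move=> j kj sj; apply: (prod0 (j := j)) => //=; rewrite (negPf sj) mul0r.
- move=> /He /andP[sk tk] H.
  have H' : forall j, j != k -> t j = s j by move=> j /H ->.
  by move: ct; rewrite (card_flip H' tk sk) ltnn.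
Qed.

Lemma coefM_down Kv (e : 'I_d -> bool -> bool -> F) (s t : basisT d) :
  (forall k b b', e k b b' != 0 -> b && ~~ b') ->
  (#|[pred j | s j]| <= #|[pred j | t j]|)%N -> Defs.coefM Kv e s t = 0.
Proof.
move=> He ct; rewrite /Defs.coefM big1 // => k _.
apply: (@term0 s t k).
- by move=> j jk sj; apply: (prod0 (j := j)) => //=; rewrite (negPf sj) mul0r.
- by move=> j kj sj; apply: (prod0 (j := j)) => //=; rewrite (negPf sj).
- move=> /He /andP[sk tk] H.
  have H' : forall j, j != k -> t j = s j by move=> j /H ->.
  by move: ct; rewrite (card_flip H' tk sk) ltnn.
Qed.
End Concrete.

Section Entries.
Variables (F : fieldType) (q : F) (d : nat) (alpha : 'I_d -> F).
Hypothesis qn0 : q != 0.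

Definition gr (x : 'I_(dimV d)) : nat := #|[pred k | (enum_val x : basisT d) k]|.

Lemma gr_le x : (gr x <= d)%N.
Proof. exact: card_le. Qed.

Lemma Kmx_entry (Kv : bool -> F) x y :
  opmx (Defs.coefK Kv) x y = (x == y)%:R * \prod_(j < d) Kv ((enum_val y : basisT d) j).
Proof. by rewrite mxE /Defs.coefK (inj_eq enum_val_inj) eq_sym. Qed.

Lemma K0_entry x y : K0mx q d x y = (x == y)%:R * q ^ (Posz (2 * gr y)%N - Posz d).
Proof. by rewrite /K0mx Kmx_entry prodK /= powconv // gr_le. Qed.

Lemma K1_entry x y : K1mx q d x y = (x == y)%:R * q ^ (Posz d - Posz (2 * gr y)%N).
Proof. by rewrite /K1mx Kmx_entry prodK /= powconv' // gr_le. Qed.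

Lemma K_weak (M : 'M[F]_(dimV d)) x y : (forall x y, M x y = (x == y)%:R * M y y) ->
  (gr x != gr y) -> M x y = 0.
Proof.
move=> HM gxy; rewrite HM; case: (eqVneq x y) => [e|]; last by rewrite mul0r.
by move: gxy; rewrite e eqxx.
Qed.

Lemma K0_diag x y : K0mx q d x y = (x == y)%:R * K0mx q d y y.
Proof. by rewrite !K0_entry eqxx mul1r. Qed.
Lemma K1_diag x y : K1mx q d x y = (x == y)%:R * K1mx q d y y.
Proof. by rewrite !K1_entry eqxx mul1r. Qed.

Lemma e0p_up x y : (gr x <= gr y)%N -> e0pmx q alpha x y = 0.
Proof.
move=> le; rewrite /e0pmx mxE; apply: coefP_up => //.
by move=> k [] [] //; rewrite /e0p1 /= eqxx.
Qed.

Lemma e1m_up x y : (gr x <= gr y)%N -> e1mmx q d x y = 0.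
Proof.
move=> le; rewrite /e1mmx mxE; apply: coefM_up => //.
by move=> k [] [] //; rewrite /e1m1 /= eqxx.
Qed.

Lemma e1p_down x y : (gr y <= gr x)%N -> e1pmx q d x y = 0.
Proof.
move=> le; rewrite /e1pmx mxE; apply: coefP_down => //.
by move=> k [] [] //; rewrite /e1p1 /= eqxx.
Qed.

Lemma e0m_down x y : (gr y <= gr x)%N -> e0mmx q alpha x y = 0.
Proof.
move=> le; rewrite /e0mmx mxE; apply: coefM_down => //.
by move=> k [] [] //; rewrite /e0m1 /= eqxx.
Qed.

Lemma prod_up (N M : 'M[F]_(dimV d)) x y :
  (forall x y, (gr x <= gr y)%N -> N x y = 0) ->
  (forall x y, (gr x != gr y) -> M x y = 0) ->
  (gr x <= gr y)%N -> (N *m M) x y = 0.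
Proof.
move=> HN HM le; rewrite mxE big1 // => z _.
case: (leqP (gr x) (gr z)) => h; first by rewrite HN // mul0r.
rewrite HM ?mulr0 //; apply/eqP => e; move: h; by rewrite e ltnNge le.
Qed.

Lemma prod_down (N M : 'M[F]_(dimV d)) x y :
  (forall x y, (gr y <= gr x)%N -> N x y = 0) ->
  (forall x y, (gr x != gr y) -> M x y = 0) ->
  (gr y <= gr x)%N -> (N *m M) x y = 0.
Proof.
move=> HN HM le; rewrite mxE big1 // => z _.
case: (leqP (gr z) (gr x)) => h; first by rewrite HN // mul0r.
rewrite HM ?mulr0 //; apply/eqP => e; move: h; by rewrite e ltnNge le.
Qed.

Lemma eD n (A B : 'M[F]_n) x y : (A + B) x y = A x y + B x y. Proof. by rewrite mxE. Qed.
Lemma eZ n k (A : 'M[F]_n) x y : (k *: A) x y = k * A x y. Proof. by rewrite mxE. Qed.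
Lemma eS n k x y : (k%:M : 'M[F]_n) x y = k *+ (x == y). Proof. by rewrite mxE. Qed.

Lemma A_low a b c u v x y : (gr x <= gr y)%N ->
  Amx q alpha a b c u v x y = a *+ (x == y) + b * K0mx q d x y + c * K1mx q d x y.
Proof.
move=> le; rewrite /Amx !eD !eZ eS.
rewrite e0p_up // (prod_up (@e1m_up) _ le); last by move=> ? ?; apply: K_weak; apply: K1_diag.
by rewrite !mulr0 !addr0.
Qed.

Lemma As_low as_ bs cs us vs x y : (gr y <= gr x)%N ->
  Asmx q alpha as_ bs cs us vs x y = as_ *+ (x == y) + bs * K0mx q d x y + cs * K1mx q d x y.
Proof.
move=> le; rewrite /Asmx !eD !eZ eS.
rewrite e1p_down // (prod_down (@e0m_down) _ le); last by move=> ? ?; apply: K_weak; apply: K0_diag.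
by rewrite !mulr0 !addr0.
Qed.

Lemma D_entry a b c x y : gr x = gr y ->
  a *+ (x == y) + b * K0mx q d x y + c * K1mx q d x y = (x == y)%:R * theta q a b c d (gr y).
Proof.
move=> _; rewrite K0_entry K1_entry /theta.
case: (eqVneq x y) => _; first by rewrite !mul1r.
by rewrite mulr0n !mul0r !mulr0 !addr0.
Qed.

Lemma D_off a b c x y : x != y ->
  a *+ (x == y) + b * K0mx q d x y + c * K1mx q d x y = 0.
Proof. by move=> xy; rewrite K0_entry K1_entry (negPf xy) !mul0r !mulr0 !addr0. Qed.
End Entries.


Unset Implicit Arguments.
Set Strict Implicit.

Theorem lemma9p7 (F : closedFieldType) (d : nat)
  (q a b c as_ bs cs : F) (alpha : 'I_d -> F) (u v us vs : F) :
  q != 0 -> b != 0 -> c != 0 -> bs != 0 -> cs != 0 ->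
  q ^+ 2 != 1 -> q ^+ 2 != -1 ->
  (forall i j : nat, (i <= d)%N -> (j <= d)%N ->
     theta q a b c d i = theta q a b c d j -> i = j) ->
  (forall i j : nat, (i <= d)%N -> (j <= d)%N ->
     theta q as_ bs cs d i = theta q as_ bs cs d j -> i = j) ->
  (forall k, alpha k != 0) ->
  u * vs = - (b * bs * q^-1 * (q - q^-1) ^+ 2) ->
  v * us = - (c * cs * q^-1 * (q - q^-1) ^+ 2) ->
  forall i : nat, (i <= d)%N ->
    ((\sum_(i <= j < d.+1)
        img (Eidem (Amx q alpha a b c u v) (theta q a b c d) j))%MS
      == (\sum_(i <= j < d.+1) Umx F d j)%MS)%MS
    /\
    ((\sum_(0 <= j < i.+1)
        img (Eidem (Asmx q alpha as_ bs cs us vs) (theta q as_ bs cs d) j))%MS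
      == (\sum_(0 <= j < i.+1) Umx F d j)%MS)%MS.
Proof.
move=> qn0 _ _ _ _ _ _ thinj thsinj _ _ _ i id.
have HA1 : forall x y, (gr x < gr y)%N -> Amx q alpha a b c u v x y = 0.
  move=> x y lt; rewrite A_low ?(ltnW lt) // D_off //.
  by apply/eqP => e; move: lt; rewrite e ltnn.
have HA2 : forall x y, gr x = gr y -> Amx q alpha a b c u v x y = (x == y)%:R * theta q a b c d (gr y).
  by move=> x y e; rewrite A_low ?e // D_entry.
have HS1 : forall x y, (gr y < gr x)%N -> Asmx q alpha as_ bs cs us vs x y = 0.
  move=> x y lt; rewrite As_low ?(ltnW lt) // D_off //.
  by apply/eqP => e; move: lt; rewrite e ltnn.
have HS2 : forall x y, gr x = gr y -> Asmx q alpha as_ bs cs us vs x y = (x == y)%:R * theta q as_ bs cs d (gr y).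
  by move=> x y e; rewrite As_low ?e // D_entry.
split.
- have := (@core F (dimV d) (EidemG (Amx q alpha a b c u v) (theta q a b c d) d) (@gr d) d i d.+1
     (G3 _ thinj) (U1 (@gr_le d) HA1 HA2) (U2 (@gr_le d) HA1 HA2 id)).
  exact.
- have := (@core F (dimV d) (EidemG (Asmx q alpha as_ bs cs us vs) (theta q as_ bs cs d) d) (@gr d) d 0 i.+1
     (G3 _ thsinj) (D1 (@gr_le d) HS1 HS2 id) (D2 (@gr_le d) HS1 HS2 id)).
  exact.
Qed.
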